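(* Suppose the joint density of the type satisfies $g(v,k)=g_v(v)g_k(k)$ for all $(v,k)$, and let $p^*$ be any maximizer of $p\,(1-G_v(p))$ over $p\in[0,1]$. Then the mechanism $(f,p)$ with $(f(v,k),p(v,k))=(k,1,p^* )$ if $v\ge p^*$ and $(f(v,k),p(v,k))=(0,0,0)$ otherwise is optimal, i.e., it is incentive compatible and individually rational and its expected revenue $\int_{V\times K}p\,dG$ is at least that of every other incentive compatible and individually rational mechanism.
   Context: A seller has one unit each of two divisible goods. An agent has private type $(v,k)\in V\times K$, $V=[0,1]$, $K=(0,1]$, and from an outcome $(a_1,a_2,t)$ with $a_1,a_2\in[0,1]$ (quantities of good 1 and good 2) and $t\in\mathbb{R}$ (payment by the agent) gets utility $U_{(v,k)}(a_1,a_2,t)=v\min\{a_1/k,a_2\}-t$. A mechanism is a pair $(f,p)$ with $f=(f_1,f_2):V\times K\to[0,1]^2$, $p:V\times K\to\mathbb{R}$. It is incentive compatible if $U_{(v,k)}(f(v,k),p(v,k))\ge U_{(v,k)}(f(v',k'),p(v',k'))$ for all types $(v,k),(v',k')$, and individually rational if $U_{(v,k)}(f(v,k),p(v,k))\ge0$ for all $(v,k)$. The type is distributed according to a joint distribution $G$ with strictly positive density $g$; $g_v,g_k$ are the marginal densities of $v$ and $k$, and $G_v$ is the marginal distribution function of $v$. *)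

(* Defs.v *)
From HB Require Import structures.
From mathcomp Require Import all_boot all_order all_algebra.
From mathcomp Require Import all_classical all_reals all_analysis.
Set Implicit Arguments. Unset Strict Implicit. Unset Printing Implicit Defensive.
Import Order.TTheory GRing.Theory Num.Theory.
Local Open Scope classical_set_scope.
Local Open Scope ring_scope.

Section Screening.
Variable R : realType.

Definition Vset : set R := `[0, 1]%classic.
Definition Kset : set R := `]0, 1]%classic.
Definition TS : set (R * R) := Vset `*` Kset.

Definition lebR := @lebesgue_measure R.

Definition utility (v k a1 a2 t : R) : R := v * Num.min (a1 / k) a2 - t.

Definition feasible (f1 f2 : R -> R -> R) : Prop :=
  forall v k, v \in Vset -> k \in Kset ->
    (0 <= f1 v k <= 1) /\ (0 <= f2 v k <= 1).

Definition IC (f1 f2 p : R -> R -> R) : Prop :=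
  forall v k v' k', v \in Vset -> k \in Kset -> v' \in Vset -> k' \in Kset ->
    utility v k (f1 v' k') (f2 v' k') (p v' k') <=
    utility v k (f1 v k) (f2 v k) (p v k).

Definition IR (f1 f2 p : R -> R -> R) : Prop :=
  forall v k, v \in Vset -> k \in Kset -> 0 <= utility v k (f1 v k) (f2 v k) (p v k).

Definition is_pos_density (g : R -> R -> R) : Prop :=
  [/\ measurable_fun TS (fun x : R * R => g x.1 x.2),
      (forall v k, v \in Vset -> k \in Kset -> 0 < g v k) &
      (\int[(lebR \x lebR)%E]_(x in TS) (g x.1 x.2)%:E = 1)%E].

Definition gv (g : R -> R -> R) (v : R) : R := Rintegral lebR Kset (fun k => g v k).
Definition gk (g : R -> R -> R) (k : R) : R := Rintegral lebR Vset (fun v => g v k).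
Definition Gv (g : R -> R -> R) (x : R) : R :=
  Rintegral lebR (Vset `&` `]-oo, x]%classic) (gv g).

Definition revenue (g p : R -> R -> R) : \bar R :=
  (\int[(lebR \x lebR)%E]_(x in TS) (p x.1 x.2 * g x.1 x.2)%:E)%E.

Definition f1_star (ps : R) (v k : R) : R := if ps <= v then k else 0.
Definition f2_star (ps : R) (v k : R) : R := if ps <= v then 1 else 0.
Definition p_star (ps : R) (v k : R) : R := if ps <= v then ps else 0.

End Screening.
Arguments Vset {R}.
Arguments Kset {R}.
Arguments TS {R}.

(* Main.v *)
Require Import Defs.
From HB Require Import structures.
From mathcomp Require Import all_boot all_order all_algebra.
From mathcomp Require Import all_classical all_reals all_analysis.
Import Order.TTheory GRing.Theory Num.Theory.
Local Open Scope classical_set_scope.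
Local Open Scope ring_scope.
From mathcomp Require Import lra ring measurable_realfun.

Lemma inV (R : realType) (v : R) : (v \in Vset) = (0 <= v <= 1).
Proof. by rewrite /Vset mem_setE in_itv. Qed.
Lemma inK (R : realType) (v : R) : (v \in Kset) = (0 < v <= 1).
Proof. by rewrite /Kset mem_setE in_itv. Qed.

Lemma q_mono (R : realType) (q P : R -> R) :
  (forall v w, v \in Vset -> w \in Vset -> v * q w - P w <= v * q v - P v) ->
  forall v w, v \in Vset -> w \in Vset -> w <= v -> q w <= q v.
Proof.
move=> IC v w Vv Vw wv.
have h1 := IC v w Vv Vw; have h2 := IC w v Vw Vv.
have h : 0 <= (v - w) * (q v - q w) by nra.
rewrite le_eqVlt in wv; case/orP: wv => [/eqP -> //|wv].
rewrite -subr_ge0; rewrite pmulr_rge0 in h => //; by rewrite subr_gt0.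
Qed.

Definition wg (R : realType) (n l : nat) : R := l%:R / n%:R.

Lemma wg_ge0 (R : realType) n l : 0 <= wg R n l.
Proof. by rewrite /wg divr_ge0. Qed.

Lemma wg_le (R : realType) n i j : (i <= j)%N -> wg R n i <= wg R n j.
Proof. by move=> ij; rewrite /wg ler_wpM2r ?invr_ge0 // ler_nat. Qed.

Lemma wgV (R : realType) n i : (0 < n)%N -> (i <= n)%N -> wg R n i \in Vset.
Proof.
move=> n0 i_n; rewrite inV wg_ge0 /= /wg ler_pdivrMr ?ltr0n // mul1r ler_nat //.
Qed.

Lemma wgS (R : realType) n l : wg R n l.+1 = wg R n l + n%:R^-1.
Proof. by rewrite /wg -natr1 mulrDl mul1r. Qed.

Lemma wg0 (R : realType) n : wg R n 0 = 0.
Proof. by rewrite /wg mul0r. Qed.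

Lemma wgn (R : realType) n : (0 < n)%N -> wg R n n = 1.
Proof. by move=> n0; rewrite /wg divff // pnatr_eq0 -lt0n. Qed.




Lemma step_bound (R : realType) (q P : R -> R) :
  (forall v w, v \in Vset -> w \in Vset -> v * q w - P w <= v * q v - P v) ->
  forall a b v, a \in Vset -> b \in Vset -> v \in Vset -> a < v -> v <= b ->
  P v <= P a + b * (q b - q a).
Proof.
move=> IC a b v Va Vb Vv av vb.
have h1 := IC v a Vv Va.
have qav := @q_mono R q P IC _ _ Vv Va (ltW av).
have qvb := @q_mono R q P IC _ _ Vb Vv vb.
have v0 : 0 <= v by move: Vv; rewrite inV => /andP[].
nra.
Qed.

Lemma grid_bound (R : realType) (q P : R -> R) n :
  (forall v w, v \in Vset -> w \in Vset -> v * q w - P w <= v * q v - P v) ->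
  P 0 <= 0 -> (0 < n)%N ->
  forall j, (j <= n)%N ->
  P (wg R n j) <= \sum_(0 <= l < j) wg R n l.+1 * (q (wg R n l.+1) - q (wg R n l)).
Proof.
move=> IC P0 n0; elim=> [|j IH] jn.
  by rewrite big_geq // wg0.
rewrite big_nat_recr //=.
have jn' : (j <= n)%N by apply: ltnW.
have H := @step_bound R q P IC _ _ _ (wgV R n j n0 jn') (wgV R n j.+1 n0 jn) (wgV R n j.+1 n0 jn).
apply: le_trans (H _ _) _.
- by rewrite wgS ltrDl invr_gt0 ltr0n.
- by [].
- by rewrite lerD2r IH.
Qed.

Lemma find_cell (R : realType) n (v : R) : 0 < v ->
  forall m, v <= wg R n m -> exists i, [/\ (i < m)%N, wg R n i < v & v <= wg R n i.+1].
Proof.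
move=> v0; elim=> [|m IH] vm.
  by move: vm; rewrite wg0 => /(lt_le_trans v0); rewrite ltxx.
case: (leP v (wg R n m)) => h.
  by case: (IH h) => i [im h1 h2]; exists i; split => //; apply: ltnW.
by exists m; split.
Qed.

Lemma c_ge0 (R : realType) (q P : R -> R) n :
  (forall v w, v \in Vset -> w \in Vset -> v * q w - P w <= v * q v - P v) ->
  (0 < n)%N -> forall l, (l < n)%N ->
  0 <= wg R n l.+1 * (q (wg R n l.+1) - q (wg R n l)).
Proof.
move=> IC n0 l ln.
apply: mulr_ge0; first exact: wg_ge0.
rewrite subr_ge0; apply: (@q_mono R q P IC); try apply: wgV => //; try exact: ltnW.
by apply: wg_le.
Qed.

Lemma pt_bound (R : realType) (q P : R -> R) n :
  (forall v w, v \in Vset -> w \in Vset -> v * q w - P w <= v * q v - P v) ->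
  P 0 <= 0 -> (0 < n)%N ->
  forall v, v \in Vset ->
  Num.max (P v) 0 <= \sum_(0 <= l < n)
     (if wg R n l < v then wg R n l.+1 * (q (wg R n l.+1) - q (wg R n l)) else 0).
Proof.
move=> IC P0 n0 v Vv.
have S0 : 0 <= \sum_(0 <= l < n)
     (if wg R n l < v then wg R n l.+1 * (q (wg R n l.+1) - q (wg R n l)) else 0).
  rewrite big_nat; apply: sumr_ge0 => l /andP[_ ln]; case: ifP => // _.
  exact: (@c_ge0 R q P).
rewrite ge_max S0 andbT.
move: (Vv); rewrite inV => /andP[v0 v1].
case: (leP v 0) => v0'.
  have v00 : v = 0 by apply/eqP; rewrite eq_le v0' v0.
  have -> : P v = P 0 by rewrite v00.
  exact: le_trans P0 S0.
have vn : v <= wg R n n by rewrite wgn.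
have [i [ilt h1 h2]] := @find_cell R n v v0' n vn.
have iV : wg R n i \in Vset by apply: wgV => //; apply: ltnW.
have i1V : wg R n i.+1 \in Vset by apply: wgV.
apply: le_trans (@step_bound R q P IC _ _ _ iV i1V Vv h1 h2) _.
apply: le_trans (_ : \sum_(0 <= l < i.+1) wg R n l.+1 * (q (wg R n l.+1) - q (wg R n l)) <= _).
  rewrite big_nat_recr //= lerD2r.
  by apply: grid_bound => //; apply: ltnW.
rewrite (big_nat_widen _ _ _ _ _ ilt) big_mkcond /=.
rewrite !big_nat; apply: ler_sum => l /andP[_ ln].
case: ifP => li.
  rewrite ifT //; apply: le_lt_trans h1; apply: wg_le; by rewrite -ltnS.
by case: ifP => // _; apply: (@c_ge0 R q P).
Qed.

Lemma sum_bound (R : realType) (q : R -> R) n (A : nat -> R) (Rs : R) :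
  (0 < n)%N ->
  (forall l, (l < n)%N -> q (wg R n l) <= q (wg R n l.+1)) ->
  0 <= q (wg R n 0) -> q (wg R n n) <= 1 ->
  (forall l, (l < n)%N -> 0 <= A l <= 1) ->
  (forall l, (l < n)%N -> wg R n l * A l <= Rs) -> 0 <= Rs ->
  \sum_(0 <= l < n) wg R n l.+1 * (q (wg R n l.+1) - q (wg R n l)) * A l
    <= Rs + n%:R^-1.
Proof.
move=> n0 qm q0 q1 A01 AR Rs0.
apply: le_trans (_ : \sum_(0 <= l < n) (Rs + n%:R^-1) * (q (wg R n l.+1) - q (wg R n l)) <= _).
  rewrite !big_nat; apply: ler_sum => l /andP[_ ln].
  have := qm l ln; have := A01 l ln; have := AR l ln.
  move=> h1 /andP[a0 a1] h2.
  have ni : 0 <= n%:R^-1 :> R by rewrite invr_ge0.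
  rewrite {1}wgS.
  have e1 : 0 <= q (wg R n l.+1) - q (wg R n l) by rewrite subr_ge0.
  have e2 : (wg R n l + n%:R^-1) * (q (wg R n l.+1) - q (wg R n l)) * A l =
     (wg R n l * A l + n%:R^-1 * A l) * (q (wg R n l.+1) - q (wg R n l)) by ring.
  rewrite e2; apply: ler_wpM2r => //; apply: lerD => //.
  by rewrite ler_piMr.
rewrite -mulr_sumr telescope_sumr //.
have ni : 0 <= n%:R^-1 :> R by rewrite invr_ge0.
have : q (wg R n 0) <= q (wg R n n).
  rewrite -(subr_ge0) -(telescope_sumr (fun k => q (wg R n k)) (leq0n n)) big_nat.
  by apply: sumr_ge0 => l /andP[_ ln]; rewrite subr_ge0 qm.
move=> h; rewrite ler_piMr //; first by rewrite addr_ge0.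
by rewrite lerBlDr (le_trans q1) // lerDl.
Qed.

Set Implicit Arguments. Unset Strict Implicit.

Lemma mV (R : realType) : measurable (@Vset R).
Proof. exact: measurable_itv. Qed.
Lemma mK (R : realType) : measurable (@Kset R).
Proof. exact: measurable_itv. Qed.
Lemma mTS (R : realType) : measurable (@TS R).
Proof. apply: measurableX; [exact: mV | exact: mK]. Qed.

Lemma sec1 (R : realType) (F : R * R -> R) k : k \in Kset ->
  measurable_fun TS F -> measurable_fun Vset (fun v => F (v, k)).
Proof.
move=> Kk mF.
apply: (measurable_comp (F := TS)) => //.
- exact: mTS.
- by move=> _ [v Vv <-]; split => //=; exact/set_mem.
- by apply: measurable_funTS; exact: pair2_measurable.
Qed.

Lemma sec2 (R : realType) (F : R * R -> R) v : v \in Vset ->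
  measurable_fun TS F -> measurable_fun Kset (fun k => F (v, k)).
Proof.
move=> Vv mF.
apply: (measurable_comp (F := TS)) => //.
- exact: mTS.
- by move=> _ [k Kk <-]; split => //=; exact/set_mem.
- by apply: measurable_funTS; exact: pair1_measurable.
Qed.

Lemma V0 (R : realType) : (0:R) \in Vset. Proof. by rewrite inV lexx ler01. Qed.
Lemma V1 (R : realType) : (1:R) \in Vset. Proof. by rewrite inV lexx ler01. Qed.
Lemma K1 (R : realType) : (1:R) \in Kset. Proof. by rewrite inK lexx ltr01. Qed.

Lemma gv_ge0 (R : realType) (g : R -> R -> R) v : is_pos_density g ->
  v \in Vset -> 0 <= gv g v.
Proof.
move=> [_ gp _] Vv; apply: Rintegral_ge0 => k Kk; apply: ltW; apply: gp => //.
exact: mem_set.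
Qed.

Lemma gk_ge0 (R : realType) (g : R -> R -> R) k : is_pos_density g ->
  k \in Kset -> 0 <= gk g k.
Proof.
move=> [_ gp _] Kk; apply: Rintegral_ge0 => v Vv; apply: ltW; apply: gp => //.
exact: mem_set.
Qed.

Lemma gv_gt0 (R : realType) (g : R -> R -> R) v : is_pos_density g ->
  (forall v k, v \in Vset -> k \in Kset -> g v k = gv g v * gk g k) ->
  v \in Vset -> 0 < gv g v.
Proof.
move=> gd hf Vv.
have := gd; case=> _ gp _.
have h := gp v 1 Vv (K1 R); rewrite hf // ?K1 // in h.
have a0 := gv_ge0 gd Vv; have b0 := gk_ge0 gd (K1 R).
rewrite lt_def a0 andbT; apply/eqP => e; by rewrite e mul0r ltxx in h.
Qed.

Lemma gk_gt0 (R : realType) (g : R -> R -> R) k : is_pos_density g ->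
  (forall v k, v \in Vset -> k \in Kset -> g v k = gv g v * gk g k) ->
  k \in Kset -> 0 < gk g k.
Proof.
move=> gd hf Kk.
have := gd; case=> _ gp _.
have h := gp 0 k (V0 R) Kk; rewrite hf // ?V0 // in h.
have a0 := gv_ge0 gd (V0 R); have b0 := gk_ge0 gd Kk.
rewrite lt_def b0 andbT; apply/eqP => e; by rewrite e mulr0 ltxx in h.
Qed.

Lemma gv_meas (R : realType) (g : R -> R -> R) : is_pos_density g ->
  (forall v k, v \in Vset -> k \in Kset -> g v k = gv g v * gk g k) ->
  measurable_fun Vset (gv g).
Proof.
move=> gd hf.
have := gd; case=> mg _ _.
have m1 := sec1 (K1 R) mg.
apply: (@eq_measurable_fun _ _ _ _ _ (fun v => g v 1 * (gk g 1)^-1)).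
  move=> v Vv; rewrite hf ?K1 // mulrK //.
  by rewrite unitfE; apply/lt0r_neq0/gk_gt0 => //; exact: K1.
apply: measurable_realfun.measurable_funM => //; exact: measurable_cst.
Qed.

Lemma gk_meas (R : realType) (g : R -> R -> R) : is_pos_density g ->
  (forall v k, v \in Vset -> k \in Kset -> g v k = gv g v * gk g k) ->
  measurable_fun Kset (gk g).
Proof.
move=> gd hf.
have := gd; case=> mg _ _.
have m1 := sec2 (V0 R) mg.
apply: (@eq_measurable_fun _ _ _ _ _ (fun k => (gv g 0)^-1 * g 0 k)).
  move=> k Kk; rewrite hf ?V0 // mulKr //.
  by rewrite unitfE; apply/lt0r_neq0/gv_gt0 => //; exact: V0.
apply: measurable_realfun.measurable_funM => //; exact: measurable_cst.
Qed.

Lemma int_one (R : realType) (D : set R) (f : R -> R) (c : R) :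
  measurable D -> 0 < c -> (forall x, D x -> 0 <= f x) -> measurable_fun D f ->
  c = fine (\int[@lebR R]_(x in D) (c * f x)%:E)%E ->
  (\int[@lebR R]_(x in D) (f x)%:E = 1)%E.
Proof.
move=> mD c0 f0 mf hc.
have e : (\int[@lebR R]_(x in D) (c * f x)%:E = c%:E * \int[@lebR R]_(x in D) (f x)%:E)%E.
  have f0' : forall x, D x -> (0 <= (f x)%:E)%E by move=> x Dx; rewrite lee_fin f0.
  have mf' : measurable_fun D (EFin \o f) by exact/measurable_EFinP.
  rewrite -(ge0_integralZl_EFin (@lebR R) mD f0' mf' (ltW c0)).
  by apply: eq_integral => x _; rewrite EFinM.
rewrite e in hc.
have : (0 <= \int[@lebR R]_(x in D) (f x)%:E)%E.
  by apply: integral_ge0 => x Dx; rewrite lee_fin f0.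
move: hc; case: (\int[@lebR R]_(x in D) (f x)%:E)%E => [r||] //=.
- move=> hc _; congr EFin.
  move: hc => /= hc.
  have cn : c != 0 by rewrite lt0r_neq0.
  by apply: (mulfI cn); rewrite mulr1 -hc.
- rewrite gt0_muley ?lte_fin //= => hc; move: c0; by rewrite {1}hc ltxx.
Qed.

Lemma intK_gk (R : realType) (g : R -> R -> R) : is_pos_density g ->
  (forall v k, v \in Vset -> k \in Kset -> g v k = gv g v * gk g k) ->
  (\int[@lebR R]_(k in Kset) (gk g k)%:E = 1)%E.
Proof.
move=> gd hf.
apply: (@int_one R Kset (gk g) (gv g 0)).
- exact: mK.
- apply: gv_gt0 => //; exact: V0.
- by move=> k Kk; apply: gk_ge0 => //; exact: mem_set.
- exact: gk_meas.
- rewrite /gv /Rintegral; congr fine; apply: eq_integral => k Kk.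
  by rewrite hf // V0.
Qed.

Lemma intV_gv (R : realType) (g : R -> R -> R) : is_pos_density g ->
  (forall v k, v \in Vset -> k \in Kset -> g v k = gv g v * gk g k) ->
  (\int[@lebR R]_(v in Vset) (gv g v)%:E = 1)%E.
Proof.
move=> gd hf.
apply: (@int_one R Vset (gv g) (gk g 1)).
- exact: mV.
- apply: gk_gt0 => //; exact: K1.
- by move=> v Vv; apply: gv_ge0 => //; exact: mem_set.
- exact: gv_meas.
- rewrite /gk /Rintegral; congr fine; apply: eq_integral => v Vv.
  by rewrite hf ?K1 // mulrC.
Qed.

Lemma tail_int (R : realType) (g : R -> R -> R) (w : R) : is_pos_density g ->
  (forall v k, v \in Vset -> k \in Kset -> g v k = gv g v * gk g k) ->
  (\int[@lebR R]_(v in Vset `&` `]w, +oo[) (gv g v)%:E = (1 - Gv g w)%:E)%E.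
Proof.
move=> gd hf.
have mA : measurable (Vset `&` `]-oo, w]%classic : set R).
  by apply: measurableI; [exact: mV | exact: measurable_itv].
have mB : measurable (Vset `&` `]w, +oo[%classic : set R).
  by apply: measurableI; [exact: mV | exact: measurable_itv].
have AB : (Vset `&` `]-oo, w]%classic) `|` (Vset `&` `]w, +oo[%classic) = Vset :> set R.
  rewrite -setIUr; apply/seteqP; split => v /=; first by case.
  move=> Vv; split => //; rewrite /= !in_itv /= andbT.
  by case: (leP v w); [left | right].
have dis : [disjoint (Vset `&` `]-oo, w]%classic) & (Vset `&` `]w, +oo[%classic : set R)].
  apply/disj_setPS => v [[_ h1] [_ h2]]; move: h1 h2 => /=; rewrite !in_itv /= andbT.
  by move=> h1 h2; move: (le_lt_trans h1 h2); rewrite ltxx.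
have H := intV_gv gd hf; rewrite -AB ge0_integral_setU // in H; first last.
- by move=> v; rewrite AB => Vv; rewrite lee_fin; apply: gv_ge0 => //; exact: mem_set.
- by rewrite AB; apply/measurable_EFinP; exact: gv_meas.
move: H.
have h1 : (0 <= \int[@lebR R]_(v in Vset `&` `]-oo, w]) (gv g v)%:E)%E.
  apply: integral_ge0 => v [Vv _]; rewrite lee_fin; apply: gv_ge0 => //; exact: mem_set.
have h2 : (0 <= \int[@lebR R]_(v in Vset `&` `]w, +oo[) (gv g v)%:E)%E.
  apply: integral_ge0 => v [Vv _]; rewrite lee_fin; apply: gv_ge0 => //; exact: mem_set.
rewrite /Gv /Rintegral.
move: h1 h2.
case: (\int[@lebR R]_(v in Vset `&` `]-oo, w]) (gv g v)%:E)%E => [r||] //;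
case: (\int[@lebR R]_(v in Vset `&` `]w, +oo[) (gv g v)%:E)%E => [s||] //=.
by move=> _ _ [<-]; congr EFin; ring.
Qed.

Lemma inv_small (R : realType) (e : R) : 0 < e ->
  exists n : nat, (0 < n)%N /\ n%:R^-1 <= e.
Proof.
move=> e0; exists (Num.truncn e^-1).+1; split => //.
have h := truncnS_gt e^-1.
set m : R := (Num.truncn e^-1).+1%:R in h *.
have m0 : 0 < m by rewrite /m ltr0n.
have h1 : e * e^-1 = 1 by rewrite mulfV // lt0r_neq0.
have h2 : m * m^-1 = 1 by rewrite mulfV // lt0r_neq0.
have h4 : 1 < e * m by rewrite -h1 ltr_pM2l.
by rewrite -(ler_pM2l m0) h2 mulrC ltW.
Qed.

Lemma oneD (R : realType) (g : R -> R -> R) (ps : R) (f1 f2 p : R -> R -> R) k :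
  is_pos_density g ->
  (forall v k, v \in Vset -> k \in Kset -> g v k = gv g v * gk g k) ->
  ps \in Vset ->
  (forall q, q \in Vset -> q * (1 - Gv g q) <= ps * (1 - Gv g ps)) ->
  feasible f1 f2 -> IC f1 f2 p -> IR f1 f2 p ->
  measurable_fun TS (fun x : R * R => p x.1 x.2) -> k \in Kset ->
  (\int[@lebR R]_(v in Vset) ((Num.max (p v k) 0) * gv g v)%:E
     <= (ps * (1 - Gv g ps))%:E)%E.
Proof.
move=> gd hf Vps hmax feas ic ir mp Kk.
set Rs := ps * (1 - Gv g ps).
pose q := fun v => Num.min (f1 v k / k) (f2 v k).
pose P := fun v => p v k.
have k0 : 0 < k by move: Kk; rewrite inK => /andP[].
have IC1 : forall v w, v \in Vset -> w \in Vset -> v * q w - P w <= v * q v - P v.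
  by move=> v w Vv Vw; have := ic v k w k Vv Kk Vw Kk.
have P0 : P 0 <= 0.
  have := ir 0 k (V0 R) Kk; rewrite /utility mul0r sub0r oppr_ge0 //.
have q01 : forall v, v \in Vset -> 0 <= q v <= 1.
  move=> v Vv; have [/andP[a0 a1] /andP[b0 b1]] := feas v k Vv Kk.
  rewrite /q; apply/andP; split.
    by rewrite le_min b0 andbT divr_ge0 // ltW.
  by rewrite ge_min b1 orbT.
have Rs0 : 0 <= Rs by have := hmax 0 (V0 R); rewrite mul0r.
apply/lee_addgt0Pr => e e0.
have [n [n0 ne]] := inv_small e0.
pose c := fun l => wg R n l.+1 * (q (wg R n l.+1) - q (wg R n l)).
have c0 : forall l, (l < n)%N -> 0 <= c l := c_ge0 R q P n IC1 n0.
pose A := fun l => `]wg R n l, +oo[%classic : set R.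
pose T := fun l => (fun v => (Num.max (c l) 0 * gv g v)%:E) \_ (A l).
have mgv := gv_meas gd hf.
have gv0 : forall v, Vset v -> 0 <= gv g v.
  by move=> v Vv; apply: gv_ge0 => //; exact: mem_set.
have mA : forall l, measurable (A l) by move=> l; exact: measurable_itv.
have mT : forall l, measurable_fun Vset (T l).
  move=> l.
  have H := (measurable_restrict (fun v => (Num.max (c l) 0 * gv g v)%:E) (mA l) (@mV R)).1.
  apply: H.
  apply/measurable_EFinP; apply: measurable_realfun.measurable_funM.
    exact: measurable_cst.
  apply: (measurable_funS (@mV R) _ mgv).
  by move=> v [].
have T0 : forall l v, Vset v -> (0 <= T l v)%E.
  move=> l v Vv; rewrite /T patchE; case: ifP => // _.
  by rewrite lee_fin mulr_ge0 ?gv0 // le_max lexx orbT.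
have mPg : measurable_fun Vset (fun v => ((Num.max (p v k) 0) * gv g v)%:E).
  apply/measurable_EFinP; apply: measurable_realfun.measurable_funM => //.
  apply: measurable_maxr; last exact: measurable_cst.
  exact: (sec1 Kk mp).
have step1 : (\int[@lebR R]_(v in Vset) ((Num.max (p v k) 0) * gv g v)%:E
   <= \int[@lebR R]_(v in Vset) (\sum_(0 <= l < n) T l v))%E.
  apply: ge0_le_integral => //.
  - exact: (@mV R).
  - by move=> v Vv; rewrite lee_fin mulr_ge0 ?gv0 // le_max lexx orbT.
  - exact: emeasurable_sum.
  - move=> v Vv.
    have Vv' : v \in Vset := mem_set Vv.
    have pb := pt_bound R q P n IC1 P0 n0 v Vv'.
    have -> : (\sum_(0 <= l < n) T l v) =
       ((\sum_(0 <= l < n) (if wg R n l < v then c l else 0)) * gv g v)%:E.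
      rewrite mulr_suml -sumEFin big_nat [RHS]big_nat; apply: eq_bigr => l /andP[_ ln].
      rewrite /T patchE /A mem_setE in_itv /= andbT.
      case: ifP => _; last by rewrite mul0r.
      by rewrite max_l ?c0.
    by rewrite lee_fin ler_wpM2r ?gv0.
have step2 : (\int[@lebR R]_(v in Vset) (\sum_(0 <= l < n) T l v)
   <= (Rs + e)%:E)%E.
  have Tl : forall l, (\int[@lebR R]_(v in Vset) T l v =
      (Num.max (c l) 0 * (1 - Gv g (wg R n l)))%:E)%E.
    move=> l; rewrite /T -integral_mkcondr EFinM -tail_int //.
    have f0' : forall x, (Vset `&` A l) x -> (0 <= (gv g x)%:E)%E.
      by move=> x [Vx _]; rewrite lee_fin gv0.
    have mf' : measurable_fun (Vset `&` A l) (EFin \o gv g).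
      apply/measurable_EFinP; apply: (measurable_funS (@mV R) _ mgv).
      by move=> v [].
    have mVA : measurable (Vset `&` A l) by apply: measurableI; [exact: (@mV R)|exact: mA].
    have m0 : 0 <= Num.max (c l) 0 by rewrite le_max lexx orbT.
    rewrite -(ge0_integralZl_EFin (@lebR R) mVA f0' mf' m0).
    by apply: eq_integral => x _; rewrite EFinM.
  rewrite ge0_integral_sum //; last exact: (@mV R).
  rewrite big_nat (eq_bigr (fun l => (c l * (1 - Gv g (wg R n l)))%:E)); last first.
    by move=> l /andP[_ ln]; rewrite Tl max_l ?c0.
  rewrite -big_nat sumEFin lee_fin.
  apply: le_trans (_ : Rs + n%:R^-1 <= _); last by rewrite lerD2l.
  have wV : forall l, (l <= n)%N -> wg R n l \in Vset by move=> l ln; apply: wgV.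
  apply: (sum_bound R q n (fun l => 1 - Gv g (wg R n l)) Rs n0) => //.
  - move=> l ln; apply: (q_mono R q P IC1); try apply: wV => //; try exact: ltnW.
    exact: wg_le.
  - by have /andP[] := q01 _ (wV 0%N (leq0n n)).
  - by have /andP[] := q01 _ (wV n (leqnn n)).
  - move=> l ln; apply/andP; split.
      rewrite -lee_fin -tail_int //; apply: integral_ge0 => x [Vx _].
      by rewrite lee_fin gv0.
    rewrite lerBlDr lerDl; apply: Rintegral_ge0 => x [Vx _]; exact: gv0.
  - move=> l ln; apply: hmax; apply: wV; exact: ltnW.
by rewrite -EFinD; apply: le_trans step1 step2.
Qed.
Lemma TS_decomp (R : realType) (g h : R -> R -> R) :
  is_pos_density g ->
  (forall v k, v \in Vset -> k \in Kset -> g v k = gv g v * gk g k) ->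
  measurable_fun TS (fun x : R * R => h x.1 x.2) ->
  (forall v k, v \in Vset -> k \in Kset -> 0 <= h v k) ->
  exists Gf : R -> \bar R,
    [/\ measurable_fun setT Gf, (forall k, (0 <= Gf k)%E),
        (forall k, k \in Kset -> Gf k =
            ((gk g k)%:E * \int[@lebR R]_(v in Vset) (h v k * gv g v)%:E)%E),
        (forall k, k \notin Kset -> Gf k = 0%E) &
        (\int[(@lebR R \x @lebR R)%E]_(z in TS) (h z.1 z.2 * g z.1 z.2)%:E
           = \int[@lebR R]_k Gf k)%E].
Proof.
move=> gd hf mh h0.
have := gd; case=> mg gp _.
pose F := (fun z : R * R => (h z.1 z.2 * g z.1 z.2)%:E) \_ TS.
have mF : measurable_fun setT F.
  apply/(measurable_restrictT _ (@mTS R)).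
  apply/measurable_EFinP; exact: measurable_realfun.measurable_funM.
have F0 : forall z, (0 <= F z)%E.
  move=> [v k]; rewrite /F patchE; case: ifP => // /set_mem [Vv Kk].
  by rewrite lee_fin mulr_ge0 // ?h0 ?ltW ?gp //; exact: mem_set.
exists (fubini_G (@lebR R) F); split.
- exact: measurable_fun_fubini_tonelli_G.
- by move=> k; apply: integral_ge0 => v _.
- move=> k Kk; rewrite /fubini_G.
  transitivity (\int[@lebR R]_(v in Vset) ((gk g k)%:E * (h v k * gv g v)%:E))%E.
    rewrite [in RHS]integral_mkcond; apply: eq_integral => v _; rewrite /F !patchE.
    case: (boolP (v \in Vset)) => Vv.
      rewrite ifT; last by apply/mem_set; split; exact/set_mem.
      by rewrite /= hf // -EFinM; congr EFin; ring.
    rewrite ifF //; apply/negbTE/negP => /set_mem [Vv' _].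
    by move/negP: Vv; apply; exact: mem_set.
  have f0 : forall v, Vset v -> (0 <= (h v k * gv g v)%:E)%E.
    move=> v Vv; rewrite lee_fin mulr_ge0 ?h0 //; try exact: mem_set.
    by apply: gv_ge0 => //; exact: mem_set.
  have mf : measurable_fun Vset (EFin \o (fun v => h v k * gv g v)).
    apply/measurable_EFinP; apply: measurable_realfun.measurable_funM.
      exact: (sec1 Kk mh).
    exact: gv_meas.
  exact: (ge0_integralZl_EFin (@lebR R) (@mV R) f0 mf (gk_ge0 gd Kk)).
- move=> k nK; rewrite /fubini_G; apply: integral0_eq => v _.
  rewrite /F patchE ifF //; apply/negbTE; apply/negP => /set_mem [_ Kk].
  by move/negP: nK; apply; exact: mem_set.
- rewrite integral_mkcond; exact: fubini_tonelli2.
Qed.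

Lemma int_gkc (R : realType) (g : R -> R -> R) (c : R) :
  is_pos_density g ->
  (forall v k, v \in Vset -> k \in Kset -> g v k = gv g v * gk g k) ->
  0 <= c ->
  (\int[@lebR R]_k (((fun k => (gk g k * c)%:E) \_ Kset) k) = c%:E)%E.
Proof.
move=> gd hf c0.
rewrite -integral_mkcond.
have f0 : forall k, Kset k -> (0 <= (gk g k)%:E)%E.
  by move=> k Kk; rewrite lee_fin; apply: gk_ge0 => //; exact: mem_set.
have mf : measurable_fun Kset (EFin \o gk g).
  by apply/measurable_EFinP; exact: gk_meas.
transitivity (c%:E * \int[@lebR R]_(k in Kset) (gk g k)%:E)%E.
  rewrite -(ge0_integralZl_EFin (@lebR R) (@mK R) f0 mf c0).
  by apply: eq_integral => k _; rewrite mulrC EFinM.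
by rewrite intK_gk // mule1.
Qed.

Lemma meas_gkc (R : realType) (g : R -> R -> R) (c : R) :
  is_pos_density g ->
  (forall v k, v \in Vset -> k \in Kset -> g v k = gv g v * gk g k) ->
  measurable_fun setT ((fun k => (gk g k * c)%:E) \_ Kset).
Proof.
move=> gd hf.
apply/(measurable_restrictT _ (@mK R)).
apply/measurable_EFinP; apply: measurable_realfun.measurable_funM.
  exact: gk_meas.
exact: measurable_cst.
Qed.

Lemma TS_le (R : realType) (g h : R -> R -> R) (c : R) :
  is_pos_density g ->
  (forall v k, v \in Vset -> k \in Kset -> g v k = gv g v * gk g k) ->
  measurable_fun TS (fun x : R * R => h x.1 x.2) ->
  (forall v k, v \in Vset -> k \in Kset -> 0 <= h v k) -> 0 <= c ->
  (forall k, k \in Kset -> (\int[@lebR R]_(v in Vset) (h v k * gv g v)%:E <= c%:E)%E) ->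
  (\int[(@lebR R \x @lebR R)%E]_(z in TS) (h z.1 z.2 * g z.1 z.2)%:E <= c%:E)%E.
Proof.
move=> gd hf mh h0 c0 hc.
have [Gf [mG G0 GK GnK ->]] := TS_decomp gd hf mh h0.
rewrite -(int_gkc gd hf c0).
apply: ge0_le_integral => //.
- exact: meas_gkc.
- move=> k _; rewrite patchE; case: (boolP (k \in Kset)) => Kk.
    rewrite GK // EFinM lee_wpmul2l ?hc //.
    by rewrite lee_fin; exact: gk_ge0.
  by rewrite GnK.
Qed.

Lemma TS_ge (R : realType) (g h : R -> R -> R) (c : R) :
  is_pos_density g ->
  (forall v k, v \in Vset -> k \in Kset -> g v k = gv g v * gk g k) ->
  measurable_fun TS (fun x : R * R => h x.1 x.2) ->
  (forall v k, v \in Vset -> k \in Kset -> 0 <= h v k) -> 0 <= c ->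
  (forall k, k \in Kset -> (c%:E <= \int[@lebR R]_(v in Vset) (h v k * gv g v)%:E)%E) ->
  (c%:E <= \int[(@lebR R \x @lebR R)%E]_(z in TS) (h z.1 z.2 * g z.1 z.2)%:E)%E.
Proof.
move=> gd hf mh h0 c0 hc.
have [Gf [mG G0 GK GnK ->]] := TS_decomp gd hf mh h0.
rewrite -(int_gkc gd hf c0).
apply: ge0_le_integral => //.
- move=> k _; rewrite patchE; case: ifP => // Kk.
  by rewrite lee_fin mulr_ge0 // gk_ge0.
- exact: meas_gkc.
- move=> k _; rewrite patchE; case: (boolP (k \in Kset)) => Kk.
    rewrite GK // EFinM lee_wpmul2l ?hc //.
    by rewrite lee_fin; exact: gk_ge0.
  by rewrite GnK.
Qed.

Lemma pstar_meas (R : realType) (ps : R) :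
  measurable_fun TS (fun x : R * R => p_star ps x.1 x.2).
Proof.
have mI : measurable (`[ps, +oo[%classic : set R) by exact: measurable_itv.
apply: (@eq_measurable_fun _ _ _ _ _ (fun x : R * R => ps * (\1_(`[ps, +oo[%classic) x.1 : R))).
  move=> [v k] _; rewrite /p_star /= indicE mem_setE in_itv /= andbT.
  by case: ifP => _; rewrite ?mulr1 ?mulr0.
apply: measurable_realfun.measurable_funM; first exact: measurable_cst.
apply: measurable_funTS.
exact: (measurableT_comp (measurable_indic (D := setT) mI) measurable_fst).
Qed.

Unset Implicit Arguments.

Theorem proposition4 (R : realType) (g : R -> R -> R) (ps : R) :
  is_pos_density g ->
  (forall v k, v \in Vset -> k \in Kset -> g v k = gv g v * gk g k) ->
  ps \in Vset ->
  (forall q, q \in Vset -> q * (1 - Gv g q) <= ps * (1 - Gv g ps)) ->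
  [/\ feasible (f1_star ps) (f2_star ps),
      IC (f1_star ps) (f2_star ps) (p_star ps),
      IR (f1_star ps) (f2_star ps) (p_star ps) &
      forall f1 f2 p : R -> R -> R,
        feasible f1 f2 -> IC f1 f2 p -> IR f1 f2 p ->
        measurable_fun TS (fun x : R * R => p x.1 x.2) ->
        (revenue g p <= revenue g (p_star ps))%E].
Proof.
move=> gd hf Vps hmax.
have := gd; case=> mg gp _.
have ps0 : 0 <= ps by move: Vps; rewrite inV => /andP[].
set Rs := ps * (1 - Gv g ps).
have Rs0 : 0 <= Rs by have := hmax 0 (V0 R); rewrite mul0r.
have kk : forall k : R, k \in Kset -> k / k = 1.
  by move=> k; rewrite inK => /andP[k0 _]; rewrite divff // lt0r_neq0.
have irs : IR (f1_star ps) (f2_star ps) (p_star ps).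
  move=> v k Vv Kk; rewrite /utility /f1_star /f2_star /p_star.
  case: ifP => h; last by rewrite mul0r minxx mulr0 subr0.
  by rewrite kk // minxx mulr1 subr_ge0.
split => //.
- move=> v k Vv Kk; rewrite /f1_star /f2_star.
  move: Kk; rewrite inK => /andP[k0 k1].
  by case: ifP => _; rewrite ?lexx ?ler01 ?(ltW k0) ?k1.
- move=> v k v' k' Vv Kk Vv' Kk'.
  have own := irs v k Vv Kk.
  move: own; rewrite /utility /f1_star /f2_star /p_star => own.
  have v0 : 0 <= v by move: Vv; rewrite inV => /andP[].
  case: (ifP (ps <= v')) => _; last by rewrite mul0r minxx mulr0 subr0.
  have m1 : Num.min (k' / k) 1 <= 1 by rewrite ge_min lexx orbT.
  have dv : v * Num.min (k' / k) 1 <= v by rewrite ler_piMr.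
  move: own; case: ifP => h own.
    by rewrite kk // minxx mulr1 lerD2r.
  apply: le_trans own; rewrite subr_le0 (le_trans dv) //.
  by rewrite leNgt; apply/negP => h'; move: h; rewrite (ltW h').
move=> f1 f2 p feas ic ir mp.
have mgv := gv_meas gd hf.
have gv0 : forall v, Vset v -> 0 <= gv g v.
  by move=> v Vv; apply: gv_ge0 => //; exact: mem_set.
have mpp : measurable_fun TS (fun x : R * R => Num.max (p x.1 x.2) 0).
  by apply: measurable_maxr => //; exact: measurable_cst.
have step_a : (revenue g p <=
    \int[(@lebR R \x @lebR R)%E]_(z in TS) (Num.max (p z.1 z.2) 0 * g z.1 z.2)%:E)%E.
  rewrite /revenue integralE.
  apply: le_trans (leeB (lexx _) (integral_ge0 _ _)) _.
    by move=> z _; exact: funeneg_ge0.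
  rewrite sube0 le_eqVlt; apply/orP; left; apply/eqP.
  apply: eq_integral => -[v k] /set_mem [Vv Kk]; rewrite funeposE -EFin_max /=.
  have g0 : 0 < g v k by apply: gp; exact: mem_set.
  case: (leP 0 (p v k)) => h.
    by rewrite !max_l // mulr_ge0 // ltW.
  by rewrite !max_r ?mul0r // ?ltW // pmulr_llt0.
have step_b : (\int[(@lebR R \x @lebR R)%E]_(z in TS) (Num.max (p z.1 z.2) 0 * g z.1 z.2)%:E
    <= Rs%:E)%E.
  apply: (@TS_le R g (fun v k => Num.max (p v k) 0) Rs) => //.
  - by move=> v k _ _; rewrite le_max lexx orbT.
  - move=> k Kk; exact: (oneD gd hf Vps hmax feas ic ir mp Kk).
have step_c : (Rs%:E <= revenue g (p_star ps))%E.
  apply: (@TS_ge R g (p_star ps) Rs) => //.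
  - exact: pstar_meas.
  - by move=> v k _ _; rewrite /p_star; case: ifP.
  move=> k Kk.
  pose A := `]ps, +oo[%classic : set R.
  have mA : measurable A by exact: measurable_itv.
  have mVA : measurable (Vset `&` A) by apply: measurableI; [exact: (@mV R)|exact: mA].
  have f0' : forall x, (Vset `&` A) x -> (0 <= (gv g x)%:E)%E.
    by move=> x [Vx _]; rewrite lee_fin gv0.
  have mf' : measurable_fun (Vset `&` A) (EFin \o gv g).
    apply/measurable_EFinP; apply: (measurable_funS (@mV R) _ mgv).
    by move=> v [].
  have e : (\int[@lebR R]_(v in Vset) ((fun v => (ps * gv g v)%:E) \_ A) v = Rs%:E)%E.
    rewrite -integral_mkcondr /Rs EFinM -tail_int //.
    rewrite -(ge0_integralZl_EFin (@lebR R) mVA f0' mf' ps0).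
    by apply: eq_integral => x _; rewrite EFinM.
  rewrite -e; apply: ge0_le_integral.
  - exact: (@mV R).
  - move=> v Vv; rewrite patchE; case: ifP => // _.
    by rewrite lee_fin mulr_ge0 ?gv0.
  - have H := (measurable_restrict (fun v => (ps * gv g v)%:E) mA (@mV R)).1.
    apply: H; apply/measurable_EFinP; apply: measurable_realfun.measurable_funM.
      exact: measurable_cst.
    apply: (measurable_funS (@mV R) _ mgv).
    by move=> v [].
  - apply/measurable_EFinP; apply: measurable_realfun.measurable_funM => //.
    exact: (sec1 Kk (pstar_meas ps)).
  - move=> v Vv; rewrite patchE /A mem_setE in_itv /= andbT /p_star.
    case: ifP => h.
      by rewrite ifT // ltW.
    by case: ifP => _; rewrite lee_fin mulr_ge0 ?gv0.
exact: le_trans step_a (le_trans step_b step_c).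
Qed.
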